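(* Let $n\ge1$, $0<\epsilon\le1$, $0\le\tau<1$, and let $G=(V,E)$ be a comparison graph. Let $P$ be a distribution on $[n]$ with $\|P-U_n\|\ge\epsilon$ and $|E|(\mu_P-\mu_P^2)\ge c(G)(\gamma_P-\mu_P^2)$. If $|E|\ge\dfrac{16n}{(1-\tau)^2\epsilon^4}$, then the collision-based algorithm $(G,\tau)$ outputs YES on $P$ with probability at most $1/4$.
   Context: $U_n$ is the uniform distribution on $[n]$; $\|P-Q\|=\sum_i|P_i-Q_i|$. $\mu_P=\sum_iP_i^2$, $\gamma_P=\sum_iP_i^3$. A comparison graph is a finite simple undirected graph $G=(V,E)$; $c(G)$ is the number of ordered triples $(u,v,w)$ of distinct vertices with $\{u,v\},\{v,w\}\in E$. Given $P$, each vertex $v$ receives an independent sample $S(v)\sim P$; for $e=\{u,v\}\in E$, $\mathbf 1_e=\mathbf 1[S(u)=S(v)]$; $Z=\sum_{e\in E}\mathbf 1_e$ and $T=|E|\frac{1+\tau\epsilon^2}{n}$; the algorithm $(G,\tau)$ outputs YES if $Z<T$ and NO otherwise. *)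

(* Defs.v *)
From HB Require Import structures.
From mathcomp Require Import all_boot all_order all_algebra.
Set Implicit Arguments. Unset Strict Implicit. Unset Printing Implicit Defensive.
Import Order.TTheory GRing.Theory Num.Theory.
Local Open Scope ring_scope.

Definition is_distr (R : realFieldType) (n : nat) (P : {ffun 'I_n -> R}) : Prop :=
  (forall i, 0 <= P i) /\ \sum_(i < n) P i = 1.

Definition dist_unif (R : realFieldType) (n : nat) (P : {ffun 'I_n -> R}) : R :=
  \sum_(i < n) `|P i - n%:R^-1|.

Definition muP (R : realFieldType) (n : nat) (P : {ffun 'I_n -> R}) : R :=
  \sum_(i < n) P i ^+ 2.
Definition gammaP (R : realFieldType) (n : nat) (P : {ffun 'I_n -> R}) : R :=
  \sum_(i < n) P i ^+ 3.

Definition simple_graph (V : finType) (adj : rel V) : Prop :=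
  symmetric adj /\ irreflexive adj.

Definition edges (V : finType) (adj : rel V) : {set {set V}} :=
  [set [set x.1; x.2] | x in [set x : V * V | adj x.1 x.2]].

Definition cG (V : finType) (adj : rel V) : nat :=
  #|[set t : V * V * V |
      [&& t.1.1 != t.1.2, t.1.2 != t.2, t.1.1 != t.2,
          [set t.1.1; t.1.2] \in edges adj & [set t.1.2; t.2] \in edges adj]]|.

Definition coll (V : finType) (n : nat) (S : {ffun V -> 'I_n}) (e : {set V}) : bool :=
  [forall u in e, forall v in e, S u == S v].

Definition Zstat (V : finType) (adj : rel V) (n : nat) (S : {ffun V -> 'I_n}) : nat :=
  #|[set e in edges adj | coll S e]|.

Definition thresh (R : realFieldType) (V : finType) (adj : rel V) (n : nat) (tau eps : R) : R :=
  (#|edges adj|%:R * (1 + tau * eps ^+ 2)) / n%:R.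

(* Probability (over independent samples S(v) ~ P) that the algorithm outputs YES, i.e. Z < T *)
Definition prob_yes (R : realFieldType) (V : finType) (adj : rel V) (n : nat)
  (tau eps : R) (P : {ffun 'I_n -> R}) : R :=
  \sum_(S : {ffun V -> 'I_n} | (Zstat adj S)%:R < thresh adj n tau eps)
     \prod_(v : V) P (S v).

(* Main.v *)
Require Import Defs.
From HB Require Import structures.
From mathcomp Require Import all_boot all_order all_algebra.
From mathcomp Require Import ring lra.
Import Order.TTheory GRing.Theory Num.Theory.
Local Open Scope ring_scope.

Lemma final_arith (R : realFieldType) (N nn mu eps tau Var : R) :
  0 < nn -> 0 < eps -> eps <= 1 -> 0 <= tau -> tau < 1 ->
  N >= 16 * nn / ((1 - tau) ^+ 2 * eps ^+ 4) ->
  eps ^+ 2 <= nn * mu - 1 -> Var <= 2 * N * mu ->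
  0 < N * mu - (N * (1 + tau * eps ^+ 2)) / nn /\
  Var / (N * mu - (N * (1 + tau * eps ^+ 2)) / nn) ^+ 2 <= 1 / 4.
Proof.
move=> nn0 e0 e1 t0 t1 HN Hmu HV.
set d := mu - nn^-1.
have mud : mu = nn^-1 + d by rewrite /d; ring.
have y_def : nn * mu - 1 = nn * d by rewrite mud mulrDr mulfV ?gt_eqF //; ring.
rewrite y_def in Hmu.
set y := nn * d in Hmu.
have e2 : 0 < eps ^+ 2 by rewrite exprn_gt0.
have y0 : 0 < y by apply: lt_le_trans Hmu.
have d0 : 0 < d by move: y0; rewrite /y pmulr_rgt0.
have K0 : 0 < (1 - tau) ^+ 2 * eps ^+ 4 by rewrite mulr_gt0 // exprn_gt0 // subr_gt0.
have HNK : 16 * nn <= N * ((1 - tau) ^+ 2 * eps ^+ 4) by rewrite -ler_pdivrMr.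
have N0 : 0 < N.
  have : 0 < N * ((1 - tau) ^+ 2 * eps ^+ 4) by apply: lt_le_trans HNK; rewrite mulr_gt0.
  by rewrite pmulr_lgt0.
have mT : N * mu - (N * (1 + tau * eps ^+ 2)) / nn = N * (d - tau * eps ^+ 2 / nn).
  by rewrite mud; field; rewrite gt_eqF.
have dT : (1 - tau) * d <= d - tau * eps ^+ 2 / nn.
  have : tau * eps ^+ 2 / nn <= tau * d.
    rewrite ler_pdivrMr // -mulrA ler_wpM2l //.
    by rewrite mulrC.
  lra.
have mT0 : 0 < N * (1 - tau) * d by rewrite mulr_gt0 // mulr_gt0 // subr_gt0.
have mTge : N * (1 - tau) * d <= N * (d - tau * eps ^+ 2 / nn) by rewrite -mulrA ler_wpM2l // ltW.
rewrite mT; split; first by apply: lt_le_trans mTge.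
rewrite ler_pdivrMr; last by rewrite exprn_gt0 //; apply: lt_le_trans mTge.
apply: le_trans HV _.
apply: le_trans (_ : _ <= 1 / 4 * (N * (1 - tau) * d) ^+ 2) _; last first.
  rewrite ler_wpM2l //; first by rewrite divr_ge0.
  by rewrite !expr2 ler_pM // ltW.
(* 2 N mu <= (N (1-tau) d)^2 / 4 *)
have e4 : eps ^+ 4 <= eps ^+ 2.
  have e21 : eps ^+ 2 <= 1 by rewrite expr2; nra.
  have -> : eps ^+ 4 = eps ^+ 2 * eps ^+ 2 by rewrite -exprD.
  nra.
have key : 8 * (1 + y) * eps ^+ 4 <= 16 * y ^+ 2.
  have h1 : eps ^+ 4 <= y by apply: le_trans e4 Hmu.
  have h2 : eps ^+ 4 <= y ^+ 2.
    rewrite (_ : 4 = 2 * 2)%N // exprM !expr2 ler_pM // ?mulr_ge0 ?ltW //.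
  have h3 : y * eps ^+ 4 <= y * y by rewrite ler_wpM2l // ltW.
  move: h2 h3; rewrite expr2; lra.
have A : 16 * nn * d ^+ 2 <= N * ((1 - tau) ^+ 2 * eps ^+ 4) * d ^+ 2.
  by rewrite ler_wpM2r // exprn_ge0 // ltW.
have B : (8 * mu) * (nn * eps ^+ 4) = 8 * (1 + y) * eps ^+ 4.
  by rewrite mud /y; field; rewrite gt_eqF.
have C : (N * (1 - tau) ^+ 2 * d ^+ 2) * (nn * eps ^+ 4)
   = nn * (N * ((1 - tau) ^+ 2 * eps ^+ 4) * d ^+ 2) by ring.
have D : 16 * y ^+ 2 = nn * (16 * nn * d ^+ 2) by rewrite /y; ring.
have ne4 : 0 < nn * eps ^+ 4 by rewrite mulr_gt0 // exprn_gt0.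
have E : 8 * mu <= N * (1 - tau) ^+ 2 * d ^+ 2.
  rewrite -(ler_pM2r ne4) B C; apply: le_trans key _; rewrite D.
  by rewrite ler_wpM2l // ltW.
have -> : 1 / 4 * (N * (1 - tau) * d) ^+ 2 = N / 4 * (N * (1 - tau) ^+ 2 * d ^+ 2) by field.
have -> : 2 * N * mu = N / 4 * (8 * mu) by field.
by rewrite ler_wpM2l // divr_ge0 // ltW.
Qed.

Lemma dist_bound (R : realFieldType) (n : nat) (P : {ffun 'I_n -> R}) (eps : R) :
  (1 <= n)%N -> is_distr P -> 0 < eps -> eps <= dist_unif P ->
  eps ^+ 2 <= n%:R * muP P - 1.
Proof.
move=> n1 [P0 P1] e0 ed.
have nn0 : (0 : R) < n%:R by rewrite ltr0n.
have nnz : (n%:R : R) != 0 by rewrite gt_eqF.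
set S1 := dist_unif P in ed.
have HQ : \sum_(i < n) (P i - n%:R^-1) ^+ 2 = muP P - n%:R^-1.
  transitivity (\sum_(i < n) (P i ^+ 2 - 2 * n%:R^-1 * P i + n%:R^-1 ^+ 2)).
    by apply: eq_bigr => i _; ring.
  rewrite big_split sumrB /= -mulr_sumr P1 sumr_const card_ord /muP.
  by rewrite -[n%:R^-1 ^+ 2 *+ n]mulr_natr; field.
set a := S1 / n%:R.
have H0 : 0 <= \sum_(i < n) (`|P i - n%:R^-1| - a) ^+ 2 by apply: sumr_ge0 => i _; apply: sqr_ge0.
have H1 : \sum_(i < n) (`|P i - n%:R^-1| - a) ^+ 2 = (muP P - n%:R^-1) - S1 ^+ 2 / n%:R.
  transitivity (\sum_(i < n) ((P i - n%:R^-1) ^+ 2 - 2 * a * `|P i - n%:R^-1| + a ^+ 2)).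
    by apply: eq_bigr => i _; rewrite -(real_normK (num_real (P i - n%:R^-1))); ring.
  rewrite big_split sumrB /= -mulr_sumr HQ sumr_const card_ord /a.
  rewrite -[(S1 / n%:R) ^+ 2 *+ n]mulr_natr (_ : \sum_(i < n) `|P i - n%:R^-1| = S1) //.
  by field.
have H2 : eps ^+ 2 <= S1 ^+ 2 by rewrite !expr2 ler_pM // ltW.
have H3 : S1 ^+ 2 <= n%:R * muP P - 1.
  have : S1 ^+ 2 / n%:R <= muP P - n%:R^-1 by lra.
  rewrite ler_pdivrMr // => H.
  have -> : n%:R * muP P - 1 = (muP P - n%:R^-1) * n%:R by field.
  exact: H.
exact: le_trans H2 H3.
Qed.

Set Implicit Arguments. Unset Strict Implicit. Unset Printing Implicit Defensive.

Section Prob.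
Variable (R : realFieldType) (n : nat) (V : finType) (P : {ffun 'I_n -> R}).
Hypothesis HP : is_distr P.

Definition wt (S : {ffun V -> 'I_n}) : R := \prod_v P (S v).
Definition Ex (f : {ffun V -> 'I_n} -> R) : R := \sum_S wt S * f S.

Lemma wt_ge0 S : 0 <= wt S.
Proof. by apply: prodr_ge0 => v _; case: HP. Qed.

Lemma Ex_ext f g : (forall S, f S = g S) -> Ex f = Ex g.
Proof. by move=> H; apply: eq_bigr => S _; rewrite H. Qed.

Lemma Ex_prod (g : V -> 'I_n -> R) :
  Ex (fun S => \prod_v g v (S v)) = \prod_v \sum_k P k * g v k.
Proof.
rewrite /Ex /wt bigA_distr_bigA; apply: eq_bigr => S _.
by rewrite -big_split.
Qed.

Lemma prod_split2 (A B : {set V}) (a b : V -> R) : [disjoint A & B] ->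
  (\prod_(v in A) a v) * (\prod_(v in B) b v) =
  \prod_v (if v \in A then a v else if v \in B then b v else 1).
Proof.
move=> dAB; rewrite [X in X * _]big_mkcond [X in _ * X]big_mkcond -big_split /=.
apply: eq_bigr => v _; case: ifP => vA; case: ifP => vB; rewrite ?mulr1 ?mul1r //.
by rewrite (disjointFr dAB vA) in vB.
Qed.

Lemma sum_delta i : \sum_k P k * (k == i)%:R = P i.
Proof.
rewrite (bigD1 i) //= eqxx mulr1 big1 ?addr0 // => k /negbTE ->.
by rewrite mulr0.
Qed.

Lemma Ex2 (A B : {set V}) i j : [disjoint A & B] ->
  Ex (fun S => (\prod_(v in A) ((S v == i)%:R : R)) * \prod_(v in B) ((S v == j)%:R : R))
  = P i ^+ #|A| * P j ^+ #|B|.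
Proof.
move=> dAB.
pose g := fun v (k : 'I_n) => if v \in A then ((k == i)%:R : R) else if v \in B then ((k == j)%:R : R) else 1.
rewrite (Ex_ext (g := fun S => \prod_v g v (S v))); last first.
  by move=> S; rewrite prod_split2.
rewrite (Ex_prod g) -!prodr_const prod_split2 //; apply: eq_bigr => v _.
rewrite /g; case: ifP => _; first by rewrite sum_delta.
case: ifP => _; first by rewrite sum_delta.
by under eq_bigr do rewrite mulr1; case: HP.
Qed.

Lemma Ex1 : Ex (fun _ => 1) = 1.
Proof.
rewrite (Ex_ext (g := fun S => \prod_v (fun _ _ => 1) v (S v))); last first.
  by move=> S; rewrite big1.
rewrite (Ex_prod (fun _ _ => 1)) big1 // => v _.
by under eq_bigr do rewrite mulr1; case: HP.
Qed.

Lemma ExD f g : Ex (fun S => f S + g S) = Ex f + Ex g.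
Proof. by rewrite /Ex -big_split; apply: eq_bigr => S _; rewrite mulrDr. Qed.

Lemma ExZ c f : Ex (fun S => c * f S) = c * Ex f.
Proof. by rewrite /Ex mulr_sumr; apply: eq_bigr => S _; rewrite mulrCA. Qed.

Lemma Ex_sum (I : finType) (Q : pred I) (F : I -> {ffun V -> 'I_n} -> R) :
  Ex (fun S => \sum_(i | Q i) F i S) = \sum_(i | Q i) Ex (F i).
Proof.
rewrite /Ex exchange_big /=; apply: eq_bigr => S _; by rewrite mulr_sumr.
Qed.

Lemma Ex_var f m : Ex (fun S => (f S - m) ^+ 2) =
  Ex (fun S => f S ^+ 2) - 2 * m * Ex f + m ^+ 2.
Proof.
have h1 : \sum_S wt S = 1 by rewrite -Ex1 /Ex; apply: eq_bigr => S _; rewrite mulr1.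
rewrite /Ex; transitivity (\sum_S (wt S * f S ^+ 2 - 2 * m * (wt S * f S) + m ^+ 2 * wt S)).
  by apply: eq_bigr => S _; ring.
by rewrite big_split sumrB /= -!mulr_sumr h1 mulr1.
Qed.

Lemma collP (S : {ffun V -> 'I_n}) (e : {set V}) :
  reflect (forall u v, u \in e -> v \in e -> S u = S v) (coll S e).
Proof.
apply: (iffP forall_inP) => [H u v ue ve | H u ue].
  by move/forall_inP: (H u ue) => /(_ v ve)/eqP.
by apply/forall_inP => v ve; rewrite (H u v ue ve).
Qed.

Lemma coll_sum (S : {ffun V -> 'I_n}) (e : {set V}) a : a \in e ->
  ((coll S e)%:R : R) = \sum_i \prod_(v in e) ((S v == i)%:R : R).
Proof.
move=> ae; rewrite (bigD1 (S a)) //= [X in _ + X]big1 ?addr0; last first.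
  move=> i ne; rewrite (bigD1 a) //= eq_sym (negbTE ne) mul0r //.
case: (boolP (coll S e)) => H.
  by rewrite big1 // => v ve; move/collP: H => /(_ v a ve ae) ->; rewrite eqxx.
have [u [v [ue ve neq]]] : exists u v, [/\ u \in e, v \in e & S u != S v].
  move/forall_inPn: H => [u ue /forall_inPn [v ve neq]]; by exists u, v.
case: (eqVneq (S u) (S a)) => Hu.
  have Hv : S v != S a by rewrite -Hu eq_sym.
  by rewrite (bigD1 v) //= (negbTE Hv) mul0r.
by rewrite (bigD1 u) //= (negbTE Hu) mul0r.
Qed.

Lemma coll_union (S : {ffun V -> 'I_n}) (e f : {set V}) : e :&: f != set0 ->
  coll S e && coll S f = coll S (e :|: f).
Proof.
case/set0Pn => c; rewrite inE => /andP [ce cf].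
apply/andP/collP => [[/collP He /collP Hf] u v | H].
  rewrite !inE => /orP [ue|uf] /orP [ve|vf].
  - exact: He.
  - by rewrite (He u c) // (Hf c v).
  - by rewrite (Hf u c) // (He c v).
  - exact: Hf.
by split; apply/collP => u v ue ve; apply: H; rewrite inE ?ue ?ve ?orbT.
Qed.

Lemma Ex_coll (e : {set V}) a : a \in e ->
  Ex (fun S => (coll S e)%:R) = \sum_i P i ^+ #|e|.
Proof.
move=> ae; rewrite (Ex_ext (g := fun S => \sum_i ((\prod_(v in e) ((S v == i)%:R : R)) *
   \prod_(v in set0) ((S v == i)%:R : R)))); last first.
  by move=> S; rewrite (coll_sum _ ae); apply: eq_bigr => i _; rewrite big_set0 mulr1.
rewrite Ex_sum; apply: eq_bigr => i _; rewrite Ex2; last by rewrite -setI_eq0 setI0. by rewrite cards0 expr0 mulr1.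
Qed.

Lemma Ex_coll_disj (e f : {set V}) a b : a \in e -> b \in f -> [disjoint e & f] ->
  Ex (fun S => (coll S e)%:R * (coll S f)%:R) = (\sum_i P i ^+ #|e|) * \sum_i P i ^+ #|f|.
Proof.
move=> ae bf dis.
rewrite (Ex_ext (g := fun S => \sum_i \sum_j ((\prod_(v in e) ((S v == i)%:R : R)) *
   \prod_(v in f) ((S v == j)%:R : R)))); last first.
  by move=> S; rewrite (coll_sum _ ae) (coll_sum _ bf) mulr_suml; apply: eq_bigr => i _; rewrite mulr_sumr.
rewrite Ex_sum mulr_suml; apply: eq_bigr => i _; rewrite Ex_sum mulr_sumr.
by apply: eq_bigr => j _; rewrite Ex2.
Qed.

End Prob.

Section Graph.
Variables (V : finType) (adj : rel V).
Hypothesis Hg : simple_graph adj.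

Lemma edgesP e : reflect (exists a b, adj a b /\ e = [set a; b]) (e \in edges adj).
Proof.
apply: (iffP imsetP) => [[x] | [a [b [ab ->]]]].
  by rewrite inE => ax ->; exists x.1, x.2.
by exists (a, b); rewrite // inE.
Qed.

Lemma edge_neq a b : adj a b -> a != b.
Proof. by move=> ab; apply/eqP => eab; move: ab; rewrite eab (proj2 Hg). Qed.

Lemma edge_card e : e \in edges adj -> #|e| = 2.
Proof. by case/edgesP => a [b [ab ->]]; rewrite cards2 edge_neq. Qed.

Lemma edge_split e x : e \in edges adj -> x \in e -> exists u, u != x /\ e = [set x; u].
Proof.
case/edgesP => a [b [ab ->]]; rewrite !inE => /orP [] /eqP ->.
  by exists b; rewrite eq_sym edge_neq.
by exists a; rewrite edge_neq // setUC.
Qed.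

Lemma edge_mem e : e \in edges adj -> exists a, a \in e.
Proof. by case/edgesP => a [b [ab ->]]; exists a; rewrite !inE eqxx. Qed.

Lemma edge_inter e f : e \in edges adj -> f \in edges adj -> e != f ->
  e :&: f != set0 -> #|e :|: f| = 3.
Proof.
move=> eE fE nef nI.
have c1 : (0 < #|e :&: f|)%N by rewrite card_gt0.
have c2 : (#|e :&: f| < 2)%N.
  rewrite ltnNge; apply/negP => H; move/negP: nef; apply.
  have /eqP <- : e :&: f == e by rewrite eqEcard subsetIl (edge_card eE).
  by rewrite eqEcard subsetIr (edge_card fE).
rewrite cardsU (edge_card eE) (edge_card fE); move: c1 c2; case: #|_| => [|[|]] //.
Qed.

Definition share_pairs : {set {set V} * {set V}} :=
  [set p | [&& p.1 \in edges adj, p.2 \in edges adj, p.1 != p.2 & p.1 :&: p.2 != set0]].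

Lemma share_le : (#|share_pairs| <= cG adj)%N.
Proof.
rewrite /cG; set T := [set t : V * V * V | _].
pose F := fun t : V * V * V => ([set t.1.1; t.1.2], [set t.1.2; t.2]).
apply: leq_trans (leq_imset_card F T); apply: subset_leq_card.
apply/subsetP => -[e f]; rewrite inE /= => /and4P [eE fE nef /set0Pn [x]].
rewrite inE => /andP [xe xf].
have [u [ux eu]] := edge_split eE xe.
have [w [wx fw]] := edge_split fE xf.
subst e f.
apply/imsetP; exists (u, x, w); last by rewrite /F /= setUC.
rewrite inE /= ux eq_sym wx /=.
have -> : u != w by apply: contra nef => /eqP ->.
by rewrite setUC eE fE.
Qed.

End Graph.

Section Main.
Variable (R : realFieldType) (n : nat) (V : finType) (adj : rel V) (P : {ffun 'I_n -> R}).
Hypothesis HP : is_distr P.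
Hypothesis Hg : simple_graph adj.

Lemma gamma_ge : muP P ^+ 2 <= gammaP P.
Proof.
case: HP => P0 P1.
have H : gammaP P - muP P ^+ 2 = \sum_(i < n) P i * (P i - muP P) ^+ 2.
  transitivity (\sum_(i < n) (P i ^+ 3 - 2 * muP P * P i ^+ 2 + muP P ^+ 2 * P i)).
    by rewrite big_split sumrB /= -!mulr_sumr P1 /gammaP /muP; ring.
  by apply: eq_bigr => i _; ring.
rewrite -subr_ge0 H; apply: sumr_ge0 => i _; rewrite mulr_ge0 ?sqr_ge0 //.
Qed.

Lemma Zstat_sum (S : {ffun V -> 'I_n}) : ((Zstat adj S)%:R : R) = \sum_(e in edges adj) ((coll S e)%:R : R).
Proof.
rewrite /Zstat -sum1_card natr_sum [LHS]big_mkcond [RHS]big_mkcond /=.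
apply: eq_bigr => e _; rewrite inE; case: (e \in edges adj); case: (coll S e) => //.
Qed.

Lemma Ex_pair e f : e \in edges adj -> f \in edges adj ->
  Ex P (fun S => ((coll S e)%:R : R) * (coll S f)%:R) =
  muP P ^+ 2 + (e == f)%:R * (muP P - muP P ^+ 2)
   + ((e, f) \in share_pairs adj)%:R * (gammaP P - muP P ^+ 2).
Proof.
move=> eE fE; rewrite /share_pairs inE /= eE fE /=.
have [a ae] := edge_mem eE; have [b bf] := edge_mem fE.
case: (eqVneq e f) => [<-|nef] /=.
  rewrite (@Ex_ext _ _ _ P _ (fun S => ((coll S e)%:R : R))); last by move=> S; case: (coll S e); rewrite ?mulr1 ?mulr0.
  rewrite (Ex_coll HP ae) (edge_card Hg eE) /muP; ring.
case: (boolP (e :&: f == set0)) => I /=.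
  rewrite (Ex_coll_disj HP ae bf); last by rewrite -setI_eq0.
  rewrite (edge_card Hg eE) (edge_card Hg fE) /muP; ring.
have abU : a \in e :|: f by rewrite inE ae.
rewrite (@Ex_ext _ _ _ P _ (fun S => ((coll S (e :|: f))%:R : R))); last first.
  by move=> S; rewrite -natrM mulnb coll_union.
rewrite (Ex_coll HP abU) (edge_inter Hg eE fE nef I) /gammaP; ring.
Qed.

Let N : R := #|edges adj|%:R.
Let Z (S : {ffun V -> 'I_n}) : R := (Zstat adj S)%:R.

Lemma EZ : Ex P Z = N * muP P.
Proof.
rewrite (@Ex_ext _ _ _ P _ (fun S => \sum_(e in edges adj) ((coll S e)%:R : R))); last first.
  by move=> S; rewrite /Z Zstat_sum.
rewrite Ex_sum (eq_bigr (fun _ => muP P)); first by rewrite sumr_const /N mulr_natl.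
move=> e eE; have [a ae] := edge_mem eE.
by rewrite (Ex_coll HP ae) (edge_card Hg eE).
Qed.

Lemma sumE (c : R) : \sum_(e in edges adj) c = c * N.
Proof. by rewrite sumr_const mulr_natr. Qed.

Lemma EZ2 : Ex P (fun S => Z S ^+ 2) = N ^+ 2 * muP P ^+ 2 + N * (muP P - muP P ^+ 2)
   + (#|share_pairs adj|)%:R * (gammaP P - muP P ^+ 2).
Proof.
rewrite (@Ex_ext _ _ _ P _ (fun S => \sum_(e in edges adj) \sum_(f in edges adj)
    ((coll S e)%:R * (coll S f)%:R : R))); last first.
  by move=> S; rewrite /Z Zstat_sum expr2 mulr_suml; apply: eq_bigr => e _; rewrite mulr_sumr.
rewrite Ex_sum.
rewrite (eq_bigr (fun e => \sum_(f in edges adj) (muP P ^+ 2 + (e == f)%:R * (muP P - muP P ^+ 2)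
   + ((e, f) \in share_pairs adj)%:R * (gammaP P - muP P ^+ 2)))); last first.
  move=> e eE; rewrite Ex_sum; apply: eq_bigr => f fE; exact: Ex_pair.
rewrite (eq_bigr (fun e => muP P ^+ 2 * N + (muP P - muP P ^+ 2) +
   \sum_(f in edges adj) ((e, f) \in share_pairs adj)%:R * (gammaP P - muP P ^+ 2))); last first.
  move=> e eE; rewrite !big_split /= sumE; congr (_ + _ + _).
  rewrite (bigD1 e) //= eqxx mul1r big1 ?addr0 // => f /andP [_ nfe].
  by rewrite eq_sym (negbTE nfe) mul0r.
rewrite !big_split /= !sumE.
have -> : forall (g : {set V} -> {set V} -> R) c, \sum_(e in edges adj) \sum_(f in edges adj) g e f * c = (\sum_(e in edges adj) \sum_(f in edges adj) g e f) * c.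
  by move=> g c; rewrite mulr_suml; apply: eq_bigr => e _; rewrite mulr_suml.
rewrite pair_big /=.
have -> : \sum_(p | (p.1 \in edges adj) && (p.2 \in edges adj)) ((p.1, p.2) \in share_pairs adj)%:R
   = (#|share_pairs adj|%:R : R).
  rewrite -sum1_card natr_sum [LHS]big_mkcond [RHS]big_mkcond /=.
  apply: eq_bigr => -[e f] _ /=; rewrite /share_pairs inE /=.
  by case: (e \in edges adj); case: (f \in edges adj); case: ((e != f) && _).
rewrite -/N; ring.
Qed.

Lemma Var_bound : (cG adj)%:R * (gammaP P - muP P ^+ 2) <= N * (muP P - muP P ^+ 2) ->
  Ex P (fun S => (Z S - N * muP P) ^+ 2) <= 2 * N * muP P.
Proof.
move=> Hc; rewrite Ex_var // EZ2 EZ.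
have g0 : 0 <= gammaP P - muP P ^+ 2 by rewrite subr_ge0 gamma_ge.
have s1 : (#|share_pairs adj|)%:R * (gammaP P - muP P ^+ 2) <= (cG adj)%:R * (gammaP P - muP P ^+ 2).
  by rewrite ler_wpM2r // ler_nat share_le.
have N0 : 0 <= N * muP P ^+ 2 by rewrite mulr_ge0 ?sqr_ge0 // /N ler0n.
lra.
Qed.

Lemma cheb (T m : R) : T < m ->
  \sum_(S : {ffun V -> 'I_n} | Z S < T) \prod_(v : V) P (S v)
   <= Ex P (fun S => (Z S - m) ^+ 2) / (m - T) ^+ 2.
Proof.
move=> Tm; have mT0 : 0 < (m - T) ^+ 2 by rewrite exprn_gt0 // subr_gt0.
rewrite ler_pdivlMr // mulr_suml /Ex big_mkcond /=; apply: ler_sum => S _.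
have w0 := wt_ge0 HP S.
case: ifP => H.
  rewrite -/(wt P S) ler_wpM2l //.
  have h1 : m - T <= m - Z S by lra.
  have -> : (Z S - m) ^+ 2 = (m - Z S) ^+ 2 by rewrite -sqrrN opprB.
  by rewrite !expr2 ler_pM // ltW // subr_gt0.
by rewrite mulr_ge0 ?sqr_ge0.
Qed.

End Main.

Unset Implicit Arguments. Set Strict Implicit.

Theorem lemma10 (R : realFieldType) (n : nat) (eps tau : R)
  (V : finType) (adj : rel V) (P : {ffun 'I_n -> R}) :
  (1 <= n)%N ->
  0 < eps -> eps <= 1 ->
  0 <= tau -> tau < 1 ->
  simple_graph adj ->
  is_distr P ->
  eps <= dist_unif P ->
  #|edges adj|%:R * (muP P - muP P ^+ 2) >= (cG adj)%:R * (gammaP P - muP P ^+ 2) ->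
  #|edges adj|%:R >= 16 * n%:R / ((1 - tau) ^+ 2 * eps ^+ 4) ->
  prob_yes adj tau eps P <= 1 / 4.
Proof.
move=> n1 e0 e1 t0 t1 Hg HP Hd Hc HN.
have Hmu := @dist_bound _ _ _ _ n1 HP e0 Hd.
have HV := @Var_bound _ _ _ adj P HP Hg Hc.
have nn0 : (0 : R) < n%:R by rewrite ltr0n.
have [mT Hb] := @final_arith _ _ _ _ _ _ _ nn0 e0 e1 t0 t1 HN Hmu HV.
rewrite /prob_yes /thresh.
apply: le_trans Hb.
have := @cheb _ _ _ adj P HP (#|edges adj|%:R * (1 + tau * eps ^+ 2) / n%:R) (#|edges adj|%:R * muP P).
rewrite subr_gt0 in mT; move/(_ mT).
by [].
Qed.
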